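(* Let $G$ be a connected unicyclic graph (a connected graph with exactly one cycle) of order $n\geq 3$ and maximum degree $\Delta(G)$, and let $k$ be an integer with $3\leq k\leq n$. If $G$ satisfies all of the following: (i) $G$ has at most two vertices of degree $\Delta(G)$; (ii) every vertex of degree $\Delta(G)$ lies on the unique cycle of $G$; (iii) if there are two vertices of degree $\Delta(G)$, they are adjacent in $G$; then $px_k(G)=\Delta(G)-1$. Otherwise, $px_k(G)=\Delta(G)$.
   Context: All graphs are finite, simple, undirected and connected. An edge-coloring of a graph assigns a color to each edge (adjacent edges may receive the same color). A tree in an edge-colored graph is proper if any two adjacent edges of the tree receive different colors. For $S\subseteq V(G)$, an $S$-tree is a subgraph of $G$ that is a tree containing all vertices of $S$. For a connected graph $G$ of order $n$ and an integer $k$ with $2\le k\le n$, an edge-coloring of $G$ is a $k$-proper coloring if for every set $S$ of $k$ vertices of $G$ there exists a proper $S$-tree in $G$. The $k$-proper index $px_k(G)$ is the minimum number of colors used in a $k$-proper coloring of $G$. *)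

(* Defs.v *)
From mathcomp Require Import all_boot.
Set Implicit Arguments. Unset Strict Implicit. Unset Printing Implicit Defensive.

Section Graphs.
Variable T : finType.

Definition simple_graph (g : rel T) : Prop := symmetric g /\ irreflexive g.

Definition connected_graph (g : rel T) : Prop := forall x y : T, connect g x y.

Definition edges (g : rel T) : {set {set T}} :=
  [set [set p.1; p.2] | p : T * T & g p.1 p.2].

Definition deg (g : rel T) (v : T) : nat := #|[set u | g v u]|.

Definition maxdeg (g : rel T) : nat := \max_(v : T) deg g v.

Definition is_cycle (r : rel T) (c : seq T) : bool :=
  [&& 2 < size c, uniq c & cycle r c].

Definition cycle_edges (c : seq T) : {set {set T}} :=
  [set [set x; next c x] | x in c].

(* connected and with exactly one cycle (cycles identified by their edge sets) *)
Definition unicyclic (g : rel T) : Prop :=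
  connected_graph g /\
  exists c, is_cycle g c /\
    forall c', is_cycle g c' -> cycle_edges c' = cycle_edges c.

Definition on_cycle (g : rel T) (v : T) : Prop :=
  exists c, is_cycle g c && (v \in c).

Definition edge_rel (F : {set {set T}}) : rel T := fun x y => [set x; y] \in F.

Definition is_subtree (g : rel T) (V : {set T}) (F : {set {set T}}) : Prop :=
  [/\ F \subset edges g,
      (forall e, e \in F -> e \subset V),
      V != set0,
      (forall x y, x \in V -> y \in V -> connect (edge_rel F) x y)
    & forall c, ~~ is_cycle (edge_rel F) c].

Definition proper_tree (m : nat) (col : {set T} -> 'I_m) (F : {set {set T}}) : Prop :=
  forall x y z, y != z -> edge_rel F x y -> edge_rel F x z ->
    col [set x; y] != col [set x; z].

Definition k_proper_coloring (g : rel T) (k m : nat) (col : {set T} -> 'I_m) : Prop :=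
  forall S : {set T}, #|S| = k ->
    exists V F, [/\ is_subtree g V F, S \subset V & proper_tree col F].

Definition is_px (g : rel T) (k p : nat) : Prop :=
  (exists col : {set T} -> 'I_p, k_proper_coloring g k col) /\
  (forall (m : nat) (col : {set T} -> 'I_m), k_proper_coloring g k col -> p <= m).

End Graphs.

(* Main.v *)
Require Import Defs.
From mathcomp Require Import all_boot zify.
Set Implicit Arguments. Unset Strict Implicit. Unset Printing Implicit Defensive.

Section Basic.
Variable T : finType.

Lemma set2_eq (a b c d : T) : [set a; b] = [set c; d] ->
  (a = c /\ b = d) \/ (a = d /\ b = c).
Proof.
move=> E.
have ha : a \in [set c; d] by rewrite -E set21.
have hb : b \in [set c; d] by rewrite -E set22.
have hc : c \in [set a; b] by rewrite E set21.
have hd : d \in [set a; b] by rewrite E set22.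
move: ha hb hc hd; rewrite !inE.
case/orP=> /eqP ea; case/orP=> /eqP eb; subst.
- by move=> _ /orP[] /eqP ->; left.
- by left.
- by right.
- by move=> /orP[] /eqP -> _; right.
Qed.

Lemma set2C' (a b : T) : [set a; b] = [set b; a].
Proof. by rewrite setUC. Qed.

Lemma in_set2' (a b : T) : (a \in [set a; b]) * (b \in [set a; b]).
Proof. by rewrite set21 set22. Qed.

Lemma prev_head (x : T) p : uniq (x :: p) -> prev (x :: p) x = last x p.
Proof.
move=> U; rewrite prev_nth mem_head /=.
have xp : x \notin p by case/andP: U.
rewrite (memNindex xp).
by have := nth_last x (x :: p); rewrite /= => ->.
Qed.

Lemma next_last' (x : T) p : uniq (x :: p) -> next (x :: p) (last x p) = x.
Proof. by move=> U; rewrite -prev_head // next_prev. Qed.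

End Basic.

Section Graph.
Variable T : finType.
Variable g : rel T.
Hypothesis gsym : symmetric g.
Hypothesis girr : irreflexive g.
Variable c0 : seq T.
Hypothesis hc0 : is_cycle g c0.
Hypothesis huni : forall c, is_cycle g c -> cycle_edges c = cycle_edges c0.

Local Notation CE := (cycle_edges c0).

Lemma g_neq x y : g x y -> x != y.
Proof. by apply: contraTneq => ->; rewrite girr. Qed.

Lemma edgesP x y : ([set x; y] \in edges g) = g x y.
Proof.
apply/imsetP/idP => [[[a b]] | hxy]; last by exists (x, y); rewrite ?inE.
rewrite inE /= => hab E.
by case: (set2_eq E) => [[-> ->]|[-> ->]] //; rewrite gsym.
Qed.

Lemma in_edges e : e \in edges g -> exists x y, g x y /\ e = [set x; y].
Proof. by case/imsetP=> [[a b]]; rewrite inE /= => hab ->; exists a, b. Qed.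

Lemma edge_relC (F : {set {set T}}) x y : edge_rel F x y = edge_rel F y x.
Proof. by rewrite /edge_rel set2C'. Qed.

Lemma close_cycle (r : rel T) x p :
  (forall a b, r a b -> g a b) -> path r x p -> uniq (x :: p) -> 1 < size p ->
  g (last x p) x -> cycle_edges (x :: p) = CE.
Proof.
move=> rg pr U sp gl; apply: huni; apply/and3P; split => //.
by rewrite /= rcons_path (sub_path rg pr) gl.
Qed.

Lemma ce_cases (r : rel T) x p e : path r x p -> uniq (x :: p) ->
  e \in cycle_edges (x :: p) ->
  e = [set last x p; x] \/ exists a b, r a b /\ e = [set a; b].
Proof.
move=> pr U /imsetP [z zin ->].
pose r' := fun a b => r a b || ((a == last x p) && (b == x)).
have cyc : cycle r' (x :: p).
  rewrite /= rcons_path (@sub_path _ r r' _ _ _ pr) /=; last by move=> a b hab; rewrite /r' hab.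
  by rewrite /r' !eqxx orbT.
have := next_cycle cyc zin; rewrite /r' => /orP [h|/andP[/eqP -> /eqP ->]].
  by right; exists z, (next (x :: p) z).
by left.
Qed.

Lemma ce_last (x : T) p : uniq (x :: p) -> [set last x p; x] \in cycle_edges (x :: p).
Proof.
move=> U; apply/imsetP; exists (last x p); first exact: mem_last.
by rewrite next_last'.
Qed.

Lemma ce_head (x y : T) p : [set x; y] \in cycle_edges (x :: y :: p).
Proof. by apply/imsetP; exists x; rewrite ?mem_head //= eqxx. Qed.

Lemma ce_vert (c : seq T) z e : e \in cycle_edges c -> z \in e -> z \in c.
Proof.
case/imsetP=> w win -> /set2P [->|->] //; by rewrite mem_next.
Qed.

Lemma vert_ce (c : seq T) z : z \in c -> [set z; next c z] \in cycle_edges c.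
Proof. by move=> zc; apply/imsetP; exists z. Qed.

Lemma uc0 : uniq c0. Proof. by case/and3P: hc0. Qed.
Lemma cc0 : cycle g c0. Proof. by case/and3P: hc0. Qed.

Lemma ce_g (a b : T) : [set a; b] \in CE -> g a b.
Proof.
case/imsetP=> z zc E; have gz := next_cycle cc0 zc.
by case: (set2_eq E) => [[-> ->]|[-> ->]] //; rewrite gsym.
Qed.

Lemma ce_nbr (v w : T) : [set v; w] \in CE -> w = next c0 v \/ w = prev c0 v.
Proof.
case/imsetP=> z zc E; case: (set2_eq E) => [[-> ->]|[-> ->]]; first by left.
by right; rewrite prev_next // uc0.
Qed.

Lemma rot_c0 (v : T) : v \in c0 -> exists q, [/\ is_cycle g (v :: q),
   cycle_edges (v :: q) = CE, next (v :: q) =1 next c0,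
   prev (v :: q) =1 prev c0 & forall z, (z \in v :: q) = (z \in c0)].
Proof.
case/rot_to=> i q E; exists q.
have ic : is_cycle g (v :: q).
  by rewrite -E /is_cycle size_rot rot_uniq rot_cycle.
split => //; first exact: huni.
- by move=> z; rewrite -E next_rot // uc0.
- by move=> z; rewrite -E prev_rot // uc0.
- by move=> z; rewrite -E mem_rot.
Qed.

Lemma next_neq_prev (v : T) : v \in c0 -> next c0 v != prev c0 v.
Proof.
move=> vc; case: (rot_c0 vc) => q [ic _ hn hp _].
rewrite -hn -hp; clear hn hp; have U : uniq (v :: q) by case/and3P: ic.
rewrite prev_head //; case/and3P: ic.
case: q U => [|a [|b q]] //= U _ /andP [va /andP [ab _]] _.
rewrite eqxx; have := mem_last b q; apply: contraL => /eqP <-. by [].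
Qed.


Lemma upath (r : rel T) x y : connect r x y ->
  exists p, [/\ path r x p, uniq (x :: p) & last x p = y].
Proof.
case/connectP=> p pr ->; case: (shortenP pr) => p' pr' U' _.
by exists p'.
Qed.

Section Tree.
Variables (V : {set T}) (F : {set {set T}}).
Hypothesis tr : is_subtree g V F.

Lemma tree_g x y : edge_rel F x y -> g x y.
Proof.
case: tr => sF _ _ _ _ h; have := subsetP sF _ h.
by rewrite edgesP.
Qed.

Lemma tree_V x y : edge_rel F x y -> (x \in V) * (y \in V).
Proof.
case: tr => _ hV _ _ _ h; have := hV _ h => /subsetP sub.
by rewrite !sub // !inE eqxx ?orbT.
Qed.

Lemma tree_path x p : path (edge_rel F) x p -> x \in V -> all (mem V) (x :: p).
Proof.
elim: p x => [|y p IH] x /=; first by move=> _ ->.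
case/andP=> hxy hp xV; rewrite xV /=.
by apply: IH => //; rewrite (tree_V hxy).
Qed.

Lemma tree_upath x y : x \in V -> y \in V ->
  exists p, [/\ path (edge_rel F) x p, uniq (x :: p), last x p = y
             & all (mem V) (x :: p)].
Proof.
move=> xV yV; case: tr => _ _ _ hc _.
case: (upath (hc x y xV yV)) => p [pr U L]; exists p; split => //.
exact: tree_path.
Qed.

Lemma missing x y : x \in V -> y \in V -> g x y -> [set x; y] \notin F ->
  [set x; y] \in CE /\ forall e, e \in CE -> e != [set x; y] -> e \in F.
Proof.
move=> xV yV gxy nF.
case: (tree_upath xV yV) => p [pr U L _].
have xy : x != y by exact: g_neq.
have sp : 1 < size p.
  case: p pr U L => [|z [|w p]] //=; first by move=> _ _ E; rewrite E eqxx in xy.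
  by move=> /andP [h _] _ E; rewrite -E in nF; rewrite /edge_rel (negbTE nF) in h.
have E : cycle_edges (x :: p) = CE.
  by apply: (close_cycle tree_g) => //; rewrite L gsym.
split.
  by rewrite -E set2C' -L; apply: ce_last.
move=> e; rewrite -E => /(ce_cases pr U) [->|[a [b [hab ->]]]].
  by rewrite L set2C' eqxx.
by move=> _.
Qed.

Lemma missing_uniq x y x' y' : x \in V -> y \in V -> g x y -> [set x; y] \notin F ->
  x' \in V -> y' \in V -> g x' y' -> [set x'; y'] \notin F ->
  [set x; y] = [set x'; y'].
Proof.
move=> xV yV gxy nF xV' yV' gxy' nF'.
case: (missing xV yV gxy nF) => _ h.
case: (missing xV' yV' gxy' nF') => ce' _.
apply/eqP; apply: contraNT nF' => ne.
by apply: h => //; rewrite eq_sym.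
Qed.

Lemma outside w x y : w \notin V -> x \in V -> y \in V -> x != y ->
  g w x -> g w y ->
  [/\ [set w; x] \in CE, [set w; y] \in CE & forall z, z \in c0 -> (z \in V) \/ z = w].
Proof.
move=> wV xV yV xy gwx gwy.
case: (tree_upath xV yV) => p [pr U L A].
have wp : w \notin x :: p.
  by apply/negP => /(allP A); rewrite /= (negbTE wV).
have pr' : path g w (x :: p) by rewrite /= gwx (sub_path tree_g pr).
have U' : uniq (w :: x :: p) by rewrite cons_uniq wp U.
have sp : 1 < size (x :: p).
  by case: p pr U L {A wp pr' U'} => [|? ?] //= _ _ E; rewrite E eqxx in xy.
have E : cycle_edges (w :: x :: p) = CE.
  by apply: (@close_cycle g) => //; rewrite /= L gsym.
split.
- by rewrite -E; apply: ce_head.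
- by rewrite -E set2C' -L; have := ce_last U'; rewrite /=.
- move=> z zc; have := vert_ce zc; rewrite -E => /ce_vert /(_ (set21 _ _)).
  rewrite inE => /orP [/eqP ->|zp]; first by right.
  by left; have := allP A z zp.
Qed.


End Tree.

Lemma chord u v : u \in c0 -> v \in c0 -> g u v -> [set u; v] \in CE.
Proof.
move=> uc vc guv.
pose R := fun a b => g a b && ([set a; b] \in CE).
case Ruv: (R u v); first by case/andP: Ruv.
have cR : cycle R c0.
  apply: cycle_from_next; first exact: uc0.
  by move=> z zc; rewrite /R (next_cycle cc0 zc) /= vert_ce.
have := connect_cycle cR uc vc => /upath [p [pr U L]].
have sp : 1 < size p.
  case: p pr U L => [|z [|w p]] //=; first by move=> _ _ E; move: guv; rewrite E girr.
  by move=> /andP [h _] _ E; rewrite E Ruv in h.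
have rg : forall a b, R a b -> g a b by move=> a b /andP[].
have E : cycle_edges (u :: p) = CE.
  by apply: (close_cycle rg) => //; rewrite L gsym.
by rewrite -E set2C' -L; apply: ce_last.
Qed.


Lemma set2_ne (x y z : T) : x != y -> y != z -> [set x; y] != [set x; z].
Proof.
move=> xy yz; apply/eqP => /set2_eq [[_ E]|[_ E]].
  by rewrite E eqxx in yz.
by rewrite E eqxx in xy.
Qed.

Lemma notin_set2 (v x y : T) e : e = [set x; y] -> v != x -> v != y -> v \notin e.
Proof. by move=> -> vx vy; rewrite !inE negb_or vx vy. Qed.

Section Patterns.
Variable m : nat.
Variable col : {set T} -> 'I_m.
Variables (V : {set T}) (F : {set {set T}}).
Hypothesis tr : is_subtree g V F.

Lemma conflict v a b : a != b -> edge_rel F v a -> edge_rel F v b ->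
  col [set v; a] = col [set v; b] -> ~ proper_tree col F.
Proof. by move=> ab ha hb E pt; have := pt v a b ab ha hb; rewrite E eqxx. Qed.

Lemma inF_nonCE x y : x \in V -> y \in V -> g x y -> [set x; y] \notin CE ->
  [set x; y] \in F.
Proof.
move=> xV yV gxy nC; apply: contraNT nC => nF.
by case: (missing tr xV yV gxy nF).
Qed.

Lemma pat_P1 v w1 w2 : w1 != w2 -> g v w1 -> g v w2 ->
  [set v; w1] \notin CE -> [set v; w2] \notin CE ->
  col [set v; w1] = col [set v; w2] ->
  v \in V -> w1 \in V -> w2 \in V -> ~ proper_tree col F.
Proof.
move=> w12 g1 g2 n1 n2 E vV w1V w2V.
apply: (conflict w12 _ _ E); exact: inF_nonCE.
Qed.

Lemma pat_key v1 x1 y1 v2 x2 y2 :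
  x1 != y1 -> g v1 x1 -> g v1 y1 -> [set v1; y1] \in CE ->
  col [set v1; x1] = col [set v1; y1] ->
  x2 != y2 -> g v2 x2 -> g v2 y2 -> [set v2; y2] \in CE ->
  col [set v2; x2] = col [set v2; y2] ->
  v2 != v1 -> v2 != x1 -> v2 != y1 ->
  x1 \in V -> y1 \in V -> x2 \in V -> ~ proper_tree col F.
Proof.
move=> xy1 gx1 gy1 cy1 E1 xy2 gx2 gy2 cy2 E2 n21 n2x n2y x1V y1V x2V.
have v2nz : forall z, z \in [set x1; y1] -> v2 \notin [set v1; z].
  by move=> z /set2P [->|->]; apply: notin_set2.
case: (boolP (v1 \in V)) => v1V.
  have g2 : forall z, z \in V -> g v1 z -> [set v1; z] \notin F ->
      z \in [set x1; y1] -> ~ proper_tree col F.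
    move=> z zV gz nF zin.
    case: (missing tr v1V zV gz nF) => _ hall.
    have hy2 : [set v2; y2] \in F.
      apply: hall => //; apply: contraNneq (v2nz z zin) => <-.
      by rewrite set21.
    have v2V : v2 \in V by have := tree_V tr hy2; case.
    have hx2 : [set v2; x2] \in F.
      apply: contraTT (v2nz z zin) => nF2; apply/negPn.
      by rewrite (missing_uniq tr v1V zV gz nF v2V x2V gx2 nF2) set21.
    exact: (conflict xy2 hx2 hy2 E2).
  case: (boolP ([set v1; x1] \in F)) => h1; last by apply: (g2 x1) => //; rewrite set21.
  case: (boolP ([set v1; y1] \in F)) => h2; last by apply: (g2 y1) => //; rewrite set22.
  exact: (conflict xy1 h1 h2 E1).
case: (outside tr v1V x1V y1V xy1 gx1 gy1) => cx1 _ hz.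
have v2c : v2 \in c0 by apply: (ce_vert cy2); rewrite set21.
have v2V : v2 \in V by case: (hz _ v2c) => // E; rewrite E eqxx in n21.
have y2V : y2 \in V.
  have y2c : y2 \in c0 by apply: (ce_vert cy2); rewrite set22.
  case: (hz _ y2c) => // E; exfalso; rewrite E set2C' in cy2.
  case: (ce_nbr cy2) => E2'; case: (ce_nbr cx1) => E3; case: (ce_nbr cy1) => E4;
    rewrite ?E2' ?E3 ?E4 ?eqxx in n2x n2y xy1 => //.
have g3 : forall z, z \in V -> g v2 z -> [set v2; z] \notin F -> False.
  move=> z zV gz nF.
  case: (missing tr v2V zV gz nF) => _ hall.
  have : [set v1; x1] \in F.
    apply: hall => //; apply: contraNneq (v2nz x1 (set21 _ _)) => ->.
    by rewrite set21.
  by move/(tree_V tr) => [h _]; rewrite h in v1V.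
case: (boolP ([set v2; x2] \in F)) => h1; last by case: (g3 x2).
case: (boolP ([set v2; y2] \in F)) => h2; last by case: (g3 y2).
exact: (conflict xy2 h1 h2 E2).
Qed.



Lemma pat_tri a b c : a != b -> b != c -> a != c -> g a b -> g b c -> g a c ->
  col [set a; b] = col [set a; c] -> col [set b; a] = col [set b; c] ->
  col [set c; a] = col [set c; b] ->
  a \in V -> b \in V -> c \in V -> ~ proper_tree col F.
Proof.
move=> ab bc ac gab gbc gac E1 E2 E3 aV bV cV.
have ne1 : [set a; b] != [set a; c] by apply: set2_ne; rewrite // eq_sym g_neq.
have ne2 : [set a; b] != [set b; c].
  by rewrite set2C'; apply: set2_ne => //; rewrite eq_sym.
have ne3 : [set a; c] != [set b; c].
  by rewrite set2C' [[set b; c]]set2C'; apply: set2_ne => //; rewrite eq_sym ?g_neq // gsym.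
case: (boolP ([set a; b] \in F)) => h1; case: (boolP ([set a; c] \in F)) => h2.
- exact: (conflict bc h1 h2 E1).
- have h3 : [set b; c] \in F.
    apply: contraNT ne3 => n3; apply/eqP.
    exact: (missing_uniq tr aV cV gac h2 bV cV gbc n3).
  apply: (conflict ac _ h3 E2); by rewrite /edge_rel set2C'.
- have h3 : [set b; c] \in F.
    apply: contraNT ne2 => n3; apply/eqP.
    exact: (missing_uniq tr aV bV gab h1 bV cV gbc n3).
  apply: (conflict ab _ _ E3); rewrite /edge_rel set2C' //.
- by case/eqP: ne1; apply: (missing_uniq tr aV bV gab h1 aV cV gac h2).
Qed.

Lemma pat_bridge v u1 u2 c1 c2 : c1 != c2 -> g v u1 -> g v u2 -> g v c1 -> g v c2 ->
  [set v; u1] \notin CE -> [set v; u2] \notin CE ->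
  [set v; c1] \in CE -> [set v; c2] \in CE ->
  col [set v; c1] = col [set v; u1] -> col [set v; c2] = col [set v; u2] ->
  u1 \in V -> u2 \in V -> c1 \in V -> ~ proper_tree col F.
Proof.
move=> c12 gu1 gu2 gc1 gc2 nu1 nu2 cc1 cc2 E1 E2 u1V u2V c1V.
have u1c1 : u1 != c1 by apply: contraNneq nu1 => ->.
have u2c2 : c2 != u2 by apply: contraNneq nu2 => <-.
have vV : v \in V.
  apply: contraNT nu1 => nv.
  by case: (outside tr nv u1V c1V u1c1 gu1 gc1).
have h1 := inF_nonCE vV u1V gu1 nu1.
case: (boolP ([set v; c1] \in F)) => hc1.
  by apply: (conflict _ hc1 h1 E1); rewrite eq_sym.
case: (missing tr vV c1V gc1 hc1) => _ hall.
have hc2 : [set v; c2] \in F.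
  by apply: hall => //; rewrite eq_sym; apply: set2_ne; rewrite // g_neq.
have c2V : c2 \in V by have := tree_V tr hc2; case.
have h2 := inF_nonCE vV u2V gu2 nu2.
exact: (conflict u2c2 hc2 h2 E2).
Qed.

End Patterns.

Lemma closing e0 : e0 \in CE -> exists x0 q,
  [/\ is_cycle g (x0 :: q), cycle_edges (x0 :: q) = CE & e0 = [set last x0 q; x0]].
Proof.
case/imsetP=> z zc ->.
have wc : next c0 z \in c0 by rewrite mem_next.
case: (rot_c0 wc) => q [ic E hn hp _]; exists (next c0 z), q; split => //.
have U : uniq (next c0 z :: q) by case/and3P: ic.
by rewrite -prev_head // hp prev_next // uc0.
Qed.

Lemma tree0 e0 : e0 \in CE -> connected_graph g -> 0 < #|T| ->
  is_subtree g setT (edges g :\ e0).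
Proof.
move=> e0c conn nT.
set F0 := edges g :\ e0.
have r0g : forall a b, edge_rel F0 a b -> g a b.
  by move=> a b; rewrite /edge_rel in_setD1 edgesP => /andP [].
split.
- exact: subsetDl.
- by move=> e _; apply: subsetT.
- by apply/set0Pn; case/card_gt0P: nT => x _; exists x; rewrite inE.
- move=> x y _ _.
  case: (closing e0c) => x0 [q [ic _ E0]].
  have U : uniq (x0 :: q) by case/and3P: ic.
  have conn0 : connect (edge_rel F0) x0 (last x0 q).
    case/and3P: ic; case/lastP: q U E0 => [|q' l'] //.
    move=> U E0 sq _ cyc; rewrite /= size_rcons in sq; rewrite last_rcons; rewrite last_rcons in E0.
    move: cyc; rewrite /= !rcons_path => /andP [/andP [pq gl] _].
    rewrite cons_uniq rcons_uniq in U; case/and3P: U.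
    rewrite mem_rcons inE negb_or => /andP [x0l x0q'] lq' _.
    apply/connectP; exists (rcons q' l'); last by rewrite last_rcons.
    rewrite rcons_path; apply/andP; split.
      apply: (@sub_in_path _ (predC1 l') g) pq; last first.
        by rewrite /= x0l /=; apply/allP => w wq; apply: contraNneq lq' => <-.
      move=> a b /= al bl gab; rewrite /edge_rel in_setD1 edgesP gab andbT E0.
      apply: contra_neq al => E; have : l' \in [set a; b] by rewrite E set21.
      by rewrite !inE => /orP [/eqP -> //|/eqP E']; move: bl; rewrite !inE E' eqxx.
    rewrite /edge_rel in_setD1 edgesP gl andbT E0.
    apply/eqP => /set2_eq [[_ E]|[E _]]; first by rewrite E eqxx in x0l.
    case: q' sq x0q' E {pq gl lq'} => [|b q''] // _ hq E.
    by rewrite /= in E; move: (mem_last b q''); rewrite E (negbTE hq).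
  have key : forall a b, g a b -> connect (edge_rel F0) a b.
    move=> a b gab; case: (boolP ([set a; b] == e0)) => [/eqP|] E.
      rewrite E0 in E; case: (set2_eq E) => [[-> ->]|[-> ->]] //.
      by rewrite (sym_connect_sym (edge_relC F0)).
    by apply: connect1; rewrite /edge_rel in_setD1 E edgesP.
  by apply: (connect_sub key); apply: conn.
- move=> c; apply/negP => /and3P [sc uc cyc].
  have ic : is_cycle g c by rewrite /is_cycle sc uc (sub_cycle r0g).
  have := huni ic; move: e0c => /[swap] <- /imsetP [z zc E].
  have := next_cycle cyc zc; rewrite /edge_rel in_setD1 -E eqxx.
  by [].
Qed.

Section Forest.
Variable F : {set {set T}}.
Hypothesis sF : F \subset edges g.
Hypothesis acyc : forall c, ~~ is_cycle (edge_rel F) c.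
Local Notation r := (edge_rel F).

Lemma rF a b : r a b -> g a b.
Proof. by move=> h; have := subsetP sF _ h; rewrite edgesP. Qed.

Lemma leaf_aux n : forall x q, #|T| - size q <= n -> path r x q -> uniq (x :: q) ->
  q != [::] -> exists u v, r u v /\ forall z, r v z -> z = u.
Proof.
elim: n => [|n IH] x q.
  rewrite leqn0 subn_eq0 => hs _ U _.
  have := max_card (mem (x :: q)); rewrite (card_uniqP U) /= => h.
  by have := leq_trans h hs; rewrite ltnn.
move=> hs pq U qn.
case/lastP: q hs pq U qn => [|q' y] // hs pq U _.
set w := last x q'.
have rwy : r w y by move: pq; rewrite rcons_path => /andP [].
case: (boolP [exists z, r y z && (z != w)]) => [/existsP [z /andP [ryz zw]]|]; last first.
  move=> /existsPn hn; exists w, y; split => // z ryz.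
  by apply/eqP; move: (hn z); rewrite ryz /= negbK.
case: (boolP (z \in x :: rcons q' y)) => zin.
  exfalso.
  have [p1 [p2 E]] : exists p1 p2, x :: rcons q' y = p1 ++ z :: p2.
    by case/splitPr: zin => p1 p2; exists p1, p2.
  have sr : sorted r (x :: rcons q' y) := pq.
  rewrite E in sr U.
  have pr2 : path r z p2 by have := (cat_sorted2 sr).2.
  have U2 : uniq (z :: p2) by move: U; rewrite cat_uniq => /and3P [_ _].
  have L : last z p2 = y.
    have := congr1 (last x) E.
    by rewrite last_cat /= last_rcons.
  have zy : z != y by apply: g_neq; rewrite gsym; apply: rF.
  have sp : 1 < size p2.
    clear sr; case: p2 E pr2 U2 L U => [|a [|b p2]] //= E _ _ L _.
      by rewrite L eqxx in zy.
    have E1 : x :: q' = rcons p1 z.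
      apply: (@rcons_injl _ y); by rewrite rcons_cons E L -cats1 cat_rcons.
    have := congr1 (last x) E1; rewrite last_rcons /= -/w => E'.
    by rewrite E' eqxx in zw.
  have : is_cycle r (z :: p2).
    by apply/and3P; split => //; rewrite /= rcons_path pr2 L ryz.
  by move: (acyc (z :: p2)) => /negP.
have hs' : #|T| - size (rcons (rcons q' y) z) <= n.
  by rewrite !size_rcons in hs *; rewrite subnS -subn1 leq_subLR add1n.
have pq' : path r x (rcons (rcons q' y) z) by rewrite rcons_path pq last_rcons ryz.
have U' : uniq (x :: rcons (rcons q' y) z).
  by rewrite -rcons_cons rcons_uniq zin U.
apply: (IH x _ hs' pq' U'); by apply/eqP => /(congr1 size); rewrite size_rcons.
Qed.

Lemma leaf : F != set0 -> exists u v, r u v /\ forall z, r v z -> z = u.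
Proof.
case/set0Pn=> e eF.
have := subsetP sF _ eF => /in_edges [x [y [gxy E]]]; rewrite E in eF.
apply: (@leaf_aux #|T| x [:: y]) => //; first exact: leq_subr.
  by rewrite /= andbT.
by rewrite /= inE g_neq.
Qed.


End Forest.

Lemma color_forest p : 0 < p -> forall F : {set {set T}}, F \subset edges g ->
  (forall c, ~~ is_cycle (edge_rel F) c) ->
  (forall x, #|[set y | edge_rel F x y]| <= p) ->
  exists col : {set T} -> 'I_p, proper_tree col F.
Proof.
move=> p0 F; have [n hn] : exists n, #|F| < n by exists #|F|.+1.
elim: n F hn => // n IH F hn sF acyc deg.
case: (boolP (F == set0)) => [/eqP F0|Fn].
  exists (fun _ => Ordinal p0) => x y z _; by rewrite /edge_rel F0 inE.
case: (leaf sF acyc Fn) => u [v [ruv hv]].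
set e := [set u; v]; set F' := F :\ e.
have eF : e \in F := ruv.
have sub' : forall a b, edge_rel F' a b -> edge_rel F a b.
  by move=> a b; rewrite /edge_rel in_setD1 => /andP [].
have hn' : #|F'| < n.
  by move: hn; rewrite (cardsD1 e F) eF add1n ltnS.
have sF' : F' \subset edges g by apply: subset_trans sF; apply: subsetDl.
have acyc' : forall c, ~~ is_cycle (edge_rel F') c.
  move=> c; apply: contra (acyc c) => /and3P [h1 h2 h3].
  by apply/and3P; split => //; apply: (sub_cycle sub').
have deg' : forall x, #|[set y | edge_rel F' x y]| <= p.
  move=> x; apply: leq_trans (deg x); apply: subset_leq_card.
  by apply/subsetP => y; rewrite !inE => /sub'.
case: (IH F' hn' sF' acyc' deg') => col' pr'.
set used := [set col' [set u; z] | z in [set z | edge_rel F' u z]].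
have hused : #|used| < p.
  apply: leq_ltn_trans (leq_imset_card _ _) _.
  have sb : [set z | edge_rel F' u z] \subset [set z | edge_rel F u z] :\ v.
    apply/subsetP => z; rewrite !inE => h; rewrite (sub' _ _ h) andbT.
    by apply: contraTneq h => ->; rewrite /edge_rel in_setD1 eqxx.
  apply: leq_ltn_trans (subset_leq_card sb) _.
  have := deg u; rewrite (cardsD1 v [set z | edge_rel F u z]) inE ruv add1n.
  by move=> h; apply: leq_trans h.
have [i iu] : exists i, i \notin used.
  have : 0 < #|~: used|.
    by move: (cardsC used); rewrite card_ord => E; rewrite -(ltn_add2l #|used|) addn0 E.
  by case/card_gt0P => j; rewrite inE => ?; exists j.
exists (fun e' => if e' == e then i else col' e').
have side : forall a b c, b != c -> edge_rel F a b -> edge_rel F a c ->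
    [set a; b] = e -> [set a; c] != e -> i != col' [set a; c].
  move=> a b c bc rab rac Eb Nc.
  case: (set2_eq Eb) => [[ea eb]|[ea eb]].
    subst a b; apply: contraNneq iu => ->; apply/imsetP; exists c => //.
    by rewrite inE /edge_rel in_setD1 Nc.
  subst a b; by rewrite (hv _ rac) eqxx in bc.
move=> a b c bc rab rac.
case: ifP => [/eqP Eb|/negbT Nb]; case: ifP => [/eqP Ec|/negbT Nc].
- exfalso; rewrite -Ec in Eb; case: (set2_eq Eb) => [[_ E]|[E1 E2]].
    by rewrite E eqxx in bc.
  by move: (rF sF rab); rewrite E2 girr.
- exact: (side a b c).
- by rewrite eq_sym; apply: (side a c b) => //; rewrite eq_sym.
- apply: pr' => //; by rewrite /edge_rel in_setD1 ?Nb ?Nc.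
Qed.

Lemma deg_F0 e0 x : e0 \in CE ->
  #|[set y | edge_rel (edges g :\ e0) x y]| <= deg g x - (x \in e0).
Proof.
move=> e0c.
have sub : [set y | edge_rel (edges g :\ e0) x y] \subset [set y | g x y].
  by apply/subsetP => y; rewrite !inE /edge_rel in_setD1 edgesP => /andP [].
case: (boolP (x \in e0)) => xe; last by rewrite subn0; apply: subset_leq_card.
have [o [gxo E]] : exists o, g x o /\ e0 = [set x; o].
  case/imsetP: e0c xe => z zc -> /set2P [->|->].
    by exists (next c0 z); rewrite (next_cycle cc0 zc).
  by exists z; rewrite set2C' gsym (next_cycle cc0 zc).
have sub2 : [set y | edge_rel (edges g :\ e0) x y] \subset [set y | g x y] :\ o.
  apply/subsetP => y; rewrite !inE /edge_rel in_setD1 edgesP E => /andP [h ->].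
  by rewrite andbT; apply: contraNneq h => ->.
apply: leq_trans (subset_leq_card sub2) _.
by rewrite /deg (cardsD1 o [set y | g x y]) inE gxo add1n subn1.
Qed.

Lemma deg2 v : v \in c0 -> 2 <= deg g v.
Proof.
move=> vc; rewrite /deg.
have <- : #|[set next c0 v; prev c0 v]| = 2 by rewrite cards2 next_neq_prev.
apply: subset_leq_card; apply/subsetP => y /set2P [->|->]; rewrite inE.
  exact: next_cycle cc0 vc.
by rewrite gsym; apply: prev_cycle cc0 vc.
Qed.

Lemma upper k p e0 : e0 \in CE -> connected_graph g -> 0 < #|T| -> 0 < p ->
  (forall x, #|[set y | edge_rel (edges g :\ e0) x y]| <= p) ->
  exists col : {set T} -> 'I_p, k_proper_coloring g k col.
Proof.
move=> e0c conn nT p0 hdeg.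
have tr := tree0 e0c conn nT.
case: (tr) => sF _ _ _ acyc.
case: (color_forest p0 sF acyc hdeg) => col pr.
by exists col => S _; exists setT, (edges g :\ e0); split => //; apply: subsetT.
Qed.

End Graph.

Lemma pad (T : finType) (S0 : {set T}) k : #|S0| <= k <= #|T| ->
  exists S : {set T}, S0 \subset S /\ #|S| = k.
Proof.
case/andP=> h1 h2.
have gen : forall j, #|S0| + j <= #|T| -> exists S : {set T}, S0 \subset S /\ #|S| = #|S0| + j.
  elim=> [|j IH] hj; first by exists S0; rewrite addn0.
  have hj' : #|S0| + j <= #|T| by apply: leq_trans hj; rewrite addnS.
  case: (IH hj') => S [sS cS].
  have : 0 < #|~: S|.
    move: (cardsC S); rewrite cS => E.
    by rewrite -(ltn_add2l (#|S0| + j)) addn0 E -addnS.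
  case/card_gt0P => x; rewrite inE => xS.
  exists (x |: S); split; first by apply: subset_trans sS (subsetUr _ _).
  by rewrite cardsU1 xS cS add1n addnS.
case: (gen (k - #|S0|)); first by rewrite subnKC.
by move=> S [sS cS]; exists S; rewrite subnKC in cS.
Qed.

Lemma card3 (T : finType) (a b c : T) : #|[set a; b; c]| <= 3.
Proof.
apply: leq_trans (leq_card_setU _ _) _.
by rewrite cards2 cards1; case: (a != b).
Qed.

Section Lower.
Variable T : finType.
Variable g : rel T.
Hypothesis gsym : symmetric g.
Hypothesis girr : irreflexive g.
Variable c0 : seq T.
Hypothesis hc0 : is_cycle g c0.
Hypothesis huni : forall c, is_cycle g c -> cycle_edges c = cycle_edges c0.
Variable k : nat.
Hypothesis hk : 3 <= k <= #|T|.
Variable m : nat.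
Variable col : {set T} -> 'I_m.
Hypothesis kp : k_proper_coloring g k col.
Local Notation CE := (cycle_edges c0).

Lemma kill (S0 : {set T}) : #|S0| <= 3 ->
  (forall V F, is_subtree g V F -> S0 \subset V -> ~ proper_tree col F) -> False.
Proof.
move=> c3 h; case/andP: hk => k3 kT.
case: (@pad T S0 k); first by rewrite kT andbT (leq_trans c3 k3).
move=> S [sS cS]; case: (kp cS) => V [F [tr SV pr]].
by apply: (h V F tr) => //; apply: subset_trans SV.
Qed.

Lemma in3 (a b c : T) : (a \in [set a; b; c]) * (b \in [set a; b; c]) * (c \in [set a; b; c]).
Proof. by rewrite !inE !eqxx ?orbT. Qed.

Ltac mem3 h := repeat split; apply: (subsetP h); rewrite !inE !eqxx ?orbT.

Lemma P1_kill v w1 w2 : w1 != w2 -> g v w1 -> g v w2 ->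
  [set v; w1] \notin CE -> [set v; w2] \notin CE ->
  col [set v; w1] = col [set v; w2] -> False.
Proof.
move=> w12 g1 g2 n1 n2 E; apply: (@kill [set v; w1; w2]); first exact: card3.
move=> V F tr sub; apply: (pat_P1 gsym girr huni tr w12 g1 g2 n1 n2 E);
  by apply: (subsetP sub); rewrite !inE !eqxx ?orbT.
Qed.

Lemma pattern v : m < deg g v -> exists x y,
  [/\ x != y, g v x, g v y, [set v; y] \in CE & col [set v; x] = col [set v; y]].
Proof.
move=> hm; set N := [set w | g v w]; set f := fun w => col [set v; w].
case: (boolP [exists w1, exists w2, [&& w1 \in N, w2 \in N, w1 != w2 & f w1 == f w2]]).
  case/existsP=> w1 /existsP [w2 /and4P [w1N w2N w12 /eqP fe]].
  rewrite !inE in w1N w2N.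
  case: (boolP ([set v; w2] \in CE)) => c2; first by exists w1, w2.
  case: (boolP ([set v; w1] \in CE)) => c1.
    by exists w2, w1; split => //; rewrite eq_sym.
  by case: (P1_kill w12 w1N w2N c1 c2 fe).
move=> hn; exfalso.
have inj : {in N &, injective f}.
  move=> a b aN bN fab; apply/eqP; apply: contraNT hn => ab.
  by apply/existsP; exists a; apply/existsP; exists b; rewrite aN bN ab fab eqxx.
have := max_card (mem (f @: N)); rewrite card_in_imset // card_ord.
by rewrite leqNgt hm.
Qed.

Lemma key_kill v1 x1 y1 v2 x2 y2 :
  x1 != y1 -> g v1 x1 -> g v1 y1 -> [set v1; y1] \in CE ->
  col [set v1; x1] = col [set v1; y1] ->
  x2 != y2 -> g v2 x2 -> g v2 y2 -> [set v2; y2] \in CE ->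
  col [set v2; x2] = col [set v2; y2] ->
  v2 != v1 -> v2 != x1 -> v2 != y1 -> False.
Proof.
move=> h1 h2 h3 h4 h5 h6 h7 h8 h9 h10 h11 h12 h13.
apply: (@kill [set x1; y1; x2]); first exact: card3.
move=> V F tr sub.
apply: (pat_key gsym girr hc0 huni tr h1 h2 h3 h4 h5 h6 h7 h8 h9 h10 h11 h12 h13);
  by apply: (subsetP sub); rewrite !inE !eqxx ?orbT.
Qed.

Lemma tri_kill a b c : a != b -> b != c -> a != c -> g a b -> g b c -> g a c ->
  col [set a; b] = col [set a; c] -> col [set b; a] = col [set b; c] ->
  col [set c; a] = col [set c; b] -> False.
Proof.
move=> h1 h2 h3 h4 h5 h6 h7 h8 h9.
apply: (@kill [set a; b; c]); first exact: card3.
move=> V F tr sub.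
apply: (pat_tri gsym girr huni tr h1 h2 h3 h4 h5 h6 h7 h8 h9);
  by apply: (subsetP sub); rewrite !inE !eqxx ?orbT.
Qed.

Lemma lower_cond v : m.+2 <= deg g v -> False.
Proof.
move=> hm; set N := [set w | g v w]; set C := [set w | [set v; w] \in CE].
set f := fun w => col [set v; w].
have cNC : #|N :&: C| <= 2.
  apply: leq_trans (_ : #|[set next c0 v; prev c0 v]| <= 2); last by rewrite cards2; case: (_ != _).
  apply: subset_leq_card; apply/subsetP => w; rewrite !inE => /andP [_ h].
  by case: (ce_nbr hc0 h) => ->; rewrite eqxx ?orbT.
have hsum := cardsID C N.
case: (boolP [exists w1, exists w2, [&& w1 \in N :\: C, w2 \in N :\: C, w1 != w2 & f w1 == f w2]]).
  case/existsP=> w1 /existsP [w2 /and4P [w1N w2N w12 /eqP fe]].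
  rewrite !inE in w1N w2N; case/andP: w1N => n1 g1; case/andP: w2N => n2 g2.
  exact: (P1_kill w12 g1 g2 n1 n2 fe).
move=> hn.
have inj : {in N :\: C &, injective f}.
  move=> a b aN bN fab; apply/eqP; apply: contraNT hn => ab.
  by apply/existsP; exists a; apply/existsP; exists b; rewrite aN bN ab fab eqxx.
have cim := card_in_imset inj.
have le := max_card (mem (f @: (N :\: C))); rewrite card_ord cim in le.
have eNC : #|N :&: C| = 2.
  apply/eqP; rewrite eqn_leq cNC /=; move: hsum hm; rewrite /deg -/N => <-.
  by move=> h; rewrite -(leq_add2r #|N :\: C|); apply: leq_trans _ h; rewrite add2n !ltnS.
have eB : #|N :\: C| = m.
  by apply/eqP; rewrite eqn_leq le /=; move: hsum hm; rewrite /deg -/N eNC => <-; rewrite add2n !ltnS.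
have surj : f @: (N :\: C) = setT.
  by apply/eqP; rewrite eqEcard subsetT cardsT card_ord cim eB /=.
move/eqP: eNC => /cards2P [c1 [c2 [c12 EC]]].
have hc : forall c, c \in [set c1; c2] -> g v c /\ [set v; c] \in CE.
  by move=> c; rewrite -EC !inE => /andP [].
have [u1 u1N fu1] : exists2 u, u \in N :\: C & f c1 = f u.
  by apply/imsetP; rewrite surj inE.
have [u2 u2N fu2] : exists2 u, u \in N :\: C & f c2 = f u.
  by apply/imsetP; rewrite surj inE.
case: (hc c1 (set21 _ _)) => gc1 cc1; case: (hc c2 (set22 _ _)) => gc2 cc2.
rewrite !inE in u1N u2N; case/andP: u1N => n1 g1; case/andP: u2N => n2 g2.
apply: (@kill [set u1; u2; c1]); first exact: card3.
move=> V F tr sub.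
apply: (pat_bridge gsym girr huni tr c12 g1 g2 gc1 gc2 n1 n2 cc1 cc2 fu1 fu2);
  by apply: (subsetP sub); rewrite !inE !eqxx ?orbT.
Qed.

End Lower.

Theorem mainTheorem13 (T : finType) (g : rel T) (k : nat) :
  simple_graph g -> unicyclic g -> 3 <= #|T| -> 3 <= k <= #|T| ->
  let D := maxdeg g in
  let cond :=
    [/\ #|[set v | deg g v == D]| <= 2,
        (forall v, deg g v = D -> on_cycle g v)
      & (#|[set v | deg g v == D]| = 2 ->
           forall u v, deg g u = D -> deg g v = D -> u != v -> g u v)] in
  (cond -> is_px g k (D - 1)) /\ (~ cond -> is_px g k D).
Proof.
move=> [gsym girr] [conn [c0 [hc0 huni]]] hT hk D cond.
have nT : 0 < #|T| by apply: leq_trans hT.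
have hdeg : forall v, deg g v <= D by move=> v; rewrite /D /maxdeg; apply: leq_bigmax.
have [vm hvm] : exists v, deg g v = D.
  by case: (@eq_bigmax T (deg g) nT) => v E; exists v; rewrite /D /maxdeg E.
have onc : forall v, on_cycle g v -> v \in c0.
  move=> v [c /andP [ic vc]]; have := vert_ce vc; rewrite (huni _ ic) => h.
  exact: (ce_vert h (set21 _ _)).
have [z0 z0c] : exists z, z \in c0.
  by case/and3P: hc0; case: (c0) => [|z q] //= _ _ _; exists z; rewrite mem_head.
have D2 : 2 <= D by apply: leq_trans (deg2 gsym hc0 huni z0c) (hdeg z0).
split.
- rewrite /cond => -[h1 h2 h3]; split.
  + have vmc := onc _ (h2 vm hvm).
    have [e0 [e0c cov]] : exists e0, e0 \in cycle_edges c0 /\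
        forall w, deg g w = D -> w \in e0.
      case: (boolP [exists u, (deg g u == D) && (u != vm)]).
      * case/existsP => u /andP [/eqP hu uv].
        have M2 : #|[set v | deg g v == D]| = 2.
          apply/eqP; rewrite eqn_leq h1 /=.
          have <- : #|[set u; vm]| = 2 by rewrite cards2 uv.
          by apply: subset_leq_card; apply/subsetP => w /set2P [->|->]; rewrite inE ?hu ?hvm.
        have guv := h3 M2 u vm hu hvm uv.
        have uc := onc _ (h2 u hu).
        exists [set u; vm]; split; first exact: (chord gsym girr hc0 huni).
        move=> w hw; apply/negPn/negP => wn.
        have : #|w |: [set u; vm]| <= #|[set v | deg g v == D]|.
          apply: subset_leq_card; apply/subsetP => y.
          by rewrite !inE => /or3P [] /eqP ->; rewrite ?hw ?hu ?hvm.
        by rewrite M2 cardsU1 wn cards2 uv.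
      * move/existsPn => hn; exists [set vm; next c0 vm]; split; first exact: vert_ce.
        move=> w hw; move: (hn w); rewrite hw eqxx /= negbK => /eqP ->.
        by rewrite set21.
    apply: (upper gsym girr hc0 huni k e0c conn nT); first by lia.
    move=> x; apply: leq_trans (deg_F0 gsym hc0 x e0c) _.
    case: (boolP (x \in e0)) => xe /=; first by have := hdeg x; lia.
    have : deg g x != D by apply: contraNneq xe => /cov.
    by have := hdeg x; lia.
  + move=> m col kp; rewrite leqNgt; apply/negP => hm.
    apply: (lower_cond gsym girr hc0 huni hk kp (v := vm)); rewrite hvm; lia.
- move=> hnc; split.
  + apply: (upper gsym girr hc0 huni k (vert_ce z0c) conn nT); first by lia.
    move=> x; apply: leq_trans (deg_F0 gsym hc0 x (vert_ce z0c)) _.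
    by apply: leq_trans (leq_subr _ _) (hdeg x).
  + move=> m col kp; rewrite leqNgt; apply/negP => hm.
    have pat : forall v, deg g v = D -> exists x y, [/\ x != y, g v x, g v y,
        [set v; y] \in cycle_edges c0 & col [set v; x] = col [set v; y]].
      by move=> v hv; apply: (pattern gsym girr huni hk kp); rewrite hv.
    have h2 : forall v, deg g v = D -> on_cycle g v.
      move=> v hv; case: (pat v hv) => x [y [_ _ _ cy _]].
      by exists c0; rewrite hc0 /=; exact: (ce_vert cy (set21 _ _)).
    have KK : forall v1 v2 x1 y1, deg g v2 = D -> x1 != y1 -> g v1 x1 -> g v1 y1 ->
        [set v1; y1] \in cycle_edges c0 -> col [set v1; x1] = col [set v1; y1] ->
        v2 != v1 -> v2 \notin [set x1; y1] -> False.
      move=> v1 v2 x1 y1 hv2 xy1 gx1 gy1 cy1 E1 n21 nin.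
      case: (pat v2 hv2) => x2 [y2 [xy2 gx2 gy2 cy2 E2]].
      move: nin; rewrite !inE negb_or => /andP [n2x n2y].
      exact: (key_kill gsym girr hc0 huni hk kp xy1 gx1 gy1 cy1 E1 xy2 gx2 gy2 cy2 E2 n21 n2x n2y).
    have pick : forall v x y w1 w2, x != y -> g v x -> g v y ->
        col [set v; x] = col [set v; y] -> w1 != w2 ->
        [\/ w1 \notin [set x; y], w2 \notin [set x; y] |
            [/\ g v w1, g v w2 & col [set v; w1] = col [set v; w2]]].
      move=> v x y w1 w2 xy gx gy E w12.
      case: (boolP (w1 \in [set x; y])) => [i1|]; last by constructor 1.
      case: (boolP (w2 \in [set x; y])) => [i2|]; last by constructor 2.
      constructor 3; move: i1 i2 w12; rewrite !inE.
      by case/orP => /eqP ->; case/orP => /eqP ->; rewrite ?eqxx.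
    case: (ltnP 2 #|[set v | deg g v == D]|) => hM.
    * have [a aM] : exists a, a \in [set v | deg g v == D].
        by apply/card_gt0P; apply: leq_ltn_trans hM.
      have [b bM] : exists b, b \in [set v | deg g v == D] :\ a.
        apply/card_gt0P; move: hM; rewrite (cardsD1 a) aM; lia.
      have [c cM] : exists c, c \in ([set v | deg g v == D] :\ a) :\ b.
        apply/card_gt0P; move: hM; rewrite (cardsD1 a) aM (cardsD1 b (_ :\ a)) bM; lia.
      rewrite !inE in aM bM cM.
      case/andP: bM => ba /eqP hb; case/and3P: cM => cb ca /eqP hc; move/eqP: aM => ha.
      case: (pat a ha) => xa [ya [xya gxa gya cya Ea]].
      case: (pat b hb) => xb [yb [xyb gxb gyb cyb Eb]].
      case: (pat c hc) => xc [yc [xyc gxc gyc cyc Ec]].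
      have bc : b != c by rewrite eq_sym.
      have ab : a != b by rewrite eq_sym.
      have ac : a != c by rewrite eq_sym.
      case: (pick a xa ya b c xya gxa gya Ea bc) => [n|n|[gab gac Eab]].
        exact: (KK a b xa ya hb xya gxa gya cya Ea ba n).
        exact: (KK a c xa ya hc xya gxa gya cya Ea ca n).
      case: (pick b xb yb a c xyb gxb gyb Eb ac) => [n|n|[gba gbc Eba]].
        exact: (KK b a xb yb ha xyb gxb gyb cyb Eb ab n).
        exact: (KK b c xb yb hc xyb gxb gyb cyb Eb cb n).
      case: (pick c xc yc a b xyc gxc gyc Ec ab) => [n|n|[gca gcb Eca]].
        exact: (KK c a xc yc ha xyc gxc gyc cyc Ec ac n).
        exact: (KK c b xc yc hb xyc gxc gyc cyc Ec bc n).
      exact: (tri_kill gsym girr huni hk kp ab bc ac gab gbc gac Eab Eba Eca).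
    * case: (boolP [exists u, exists v, [&& deg g u == D, deg g v == D, u != v & ~~ g u v]]).
        case/existsP => u /existsP [v /and4P [/eqP hu /eqP hv uv ng]].
        case: (pat u hu) => xu [yu [xyu gxu gyu cyu Eu]].
        apply: (KK u v xu yu hv xyu gxu gyu cyu Eu); first by rewrite eq_sym.
        rewrite !inE negb_or; apply/andP; split.
          by apply: contraNneq ng => ->.
        by apply: contraNneq ng => ->.
      move/existsPn => hn; apply: hnc; split => // _ u v hu hv uv.
      move: (hn u) => /existsPn /(_ v); rewrite hu hv uv eqxx /=.
      by rewrite negbK.
Qed.
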